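(* Let $R\colon\mathbb R^d\to\mathbb R$, $R(\mathbf x)=\sum_{i=1}^p\psi_i(\mathbf w_i^T\mathbf x)$ with $\mathbf w_i\in\mathbb R^d$ and convex $\psi_i\in C^{1,1}(\mathbb R)$, let $L=\mathrm{Lip}(\nabla R)$, $\lambda\ge0$, and $t\ge1$ an integer. For $\mathbf y\in\mathbb R^d$ define $\mathbf x_0=\mathbf y$ and $\mathbf x_{k+1}=\mathbf x_k-\alpha\bigl((\mathbf x_k-\mathbf y)+\lambda\nabla R(\mathbf x_k)\bigr)$, and let the $t$-step denoiser be the map $\mathbf y\mapsto\mathbf x_t$. If $\alpha\in[0,2/(2+\lambda L)]$, then the $t$-step denoiser is averaged.
   Context: A map $\mathbf D\colon\mathbb R^d\to\mathbb R^d$ is averaged if $\mathbf D=\beta\mathbf N+(1-\beta)\mathbf{Id}$ for some $\beta\in(0,1)$ and some nonexpansive (1-Lipschitz) map $\mathbf N\colon\mathbb R^d\to\mathbb R^d$. $C^{1,1}(\mathbb R)$ is the set of differentiable functions with Lipschitz-continuous derivative. *)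

(* Defs.v *)
From HB Require Import structures.
From mathcomp Require Import all_boot all_order all_algebra.
From mathcomp Require Import all_classical all_reals all_analysis.
Set Implicit Arguments. Unset Strict Implicit. Unset Printing Implicit Defensive.
Import Order.TTheory GRing.Theory Num.Theory.
Import numFieldNormedType.Exports.
Local Open Scope ring_scope.

Section Defs.
Variables (R : realType) (d : nat).

Definition dotp (u v : 'rV[R]_d) : R := \sum_(j < d) u ord0 j * v ord0 j.
Definition enorm (u : 'rV[R]_d) : R := Num.sqrt (dotp u u).

Definition nonexpansive (N : 'rV[R]_d -> 'rV[R]_d) : Prop :=
  forall x y, enorm (N x - N y) <= enorm (x - y).

Definition averaged (D : 'rV[R]_d -> 'rV[R]_d) : Prop :=
  exists beta : R, 0 < beta < 1 /\
    exists N : 'rV[R]_d -> 'rV[R]_d, nonexpansive N /\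
      forall x, D x = beta *: N x + (1 - beta) *: x.

Definition lipschitz_vec (L : R) (G : 'rV[R]_d -> 'rV[R]_d) : Prop :=
  0 <= L /\ forall x y, enorm (G x - G y) <= L * enorm (x - y).

Definition ridge (p : nat) (w : 'I_p -> 'rV[R]_d) (psi : 'I_p -> R -> R)
  (x : 'rV[R]_d) : R := \sum_(i < p) psi i (dotp (w i) x).

(* its gradient (chain rule), given dpsi i = psi_i' *)
Definition ridge_grad (p : nat) (w : 'I_p -> 'rV[R]_d) (dpsi : 'I_p -> R -> R)
  (x : 'rV[R]_d) : 'rV[R]_d := \sum_(i < p) dpsi i (dotp (w i) x) *: w i.

(* one gradient step on  x |-> 1/2 |x - y|^2 + lambda R(x) *)
Definition denoise_step (G : 'rV[R]_d -> 'rV[R]_d) (alpha lambda : R)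
  (y x : 'rV[R]_d) : 'rV[R]_d := x - alpha *: ((x - y) + lambda *: G x).

Definition t_step_denoiser (G : 'rV[R]_d -> 'rV[R]_d) (alpha lambda : R)
  (t : nat) (y : 'rV[R]_d) : 'rV[R]_d := iter t (denoise_step G alpha lambda y) y.

End Defs.

Definition convex_fun (R : realType) (f : R -> R) : Prop :=
  forall x y (s : R), 0 <= s <= 1 -> f (s * x + (1 - s) * y) <= s * f x + (1 - s) * f y.

Definition lipschitz_real (R : realType) (L : R) (g : R -> R) : Prop :=
  forall a b : R, `|g a - g b| <= L * `|a - b|.

(* Main.v *)
Require Import Defs.
From HB Require Import structures.
From mathcomp Require Import all_boot all_order all_algebra.
From mathcomp Require Import all_classical all_reals all_analysis.
From mathcomp Require Import ring lra.
Import Order.TTheory GRing.Theory Num.Theory.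
Import numFieldNormedType.Exports.
Local Open Scope classical_set_scope.
Local Open Scope ring_scope.

Lemma eqW' (R : realType) (x y : R) : x = y -> x <= y.
Proof. by move=> ->. Qed.
Arguments eqW' {R x y}.

Section Lin.
Variables (R : realType) (d : nat).
Implicit Types u v z : 'rV[R]_d.

Lemma dotpC u v : dotp u v = dotp v u.
Proof. by apply: eq_bigr => j _; rewrite mulrC. Qed.

Lemma dotpDl u v z : dotp (u + v) z = dotp u z + dotp v z.
Proof. by rewrite /dotp -big_split; apply: eq_bigr => j _; rewrite mxE mulrDl. Qed.

Lemma dotpZl a u v : dotp (a *: u) v = a * dotp u v.
Proof. by rewrite /dotp mulr_sumr; apply: eq_bigr => j _; rewrite mxE mulrA. Qed.

Lemma dotpNl u v : dotp (- u) v = - dotp u v.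
Proof. by rewrite -scaleN1r dotpZl mulN1r. Qed.

Lemma dotpBl u v z : dotp (u - v) z = dotp u z - dotp v z.
Proof. by rewrite dotpDl dotpNl. Qed.

Lemma dotpDr u v z : dotp z (u + v) = dotp z u + dotp z v.
Proof. by rewrite !(dotpC z) dotpDl. Qed.

Lemma dotpZr a u v : dotp v (a *: u) = a * dotp v u.
Proof. by rewrite !(dotpC v) dotpZl. Qed.

Lemma dotpNr u v : dotp v (- u) = - dotp v u.
Proof. by rewrite !(dotpC v) dotpNl. Qed.

Lemma dotpBr u v z : dotp z (u - v) = dotp z u - dotp z v.
Proof. by rewrite dotpDr dotpNr. Qed.

Lemma dotp0l v : dotp 0 v = 0.
Proof. by rewrite -(scale0r (0 : 'rV[R]_d)) dotpZl mul0r. Qed.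

Lemma dotp_suml n (f : 'I_n -> 'rV[R]_d) v :
  dotp (\sum_(i < n) f i) v = \sum_(i < n) dotp (f i) v.
Proof.
by apply: (big_morph (fun u => dotp u v)) => [x y|]; rewrite ?dotpDl ?dotp0l.
Qed.

Lemma dotp_ge0 u : 0 <= dotp u u.
Proof. by apply: sumr_ge0 => j _; rewrite -expr2 sqr_ge0. Qed.

Lemma dotp_eq0 u v : dotp u u = 0 -> dotp u v = 0.
Proof.
move=> /eqP; rewrite psumr_eq0; last by move=> j _; rewrite -expr2 sqr_ge0.
move=> /allP H; apply: big1 => j _.
have /implyP := H j (mem_index_enum j); rewrite -expr2 sqrf_eq0 => /(_ isT)/eqP->.
by rewrite mul0r.
Qed.

Lemma enorm_ge0 u : 0 <= enorm u.
Proof. exact: sqrtr_ge0. Qed.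

Lemma enorm_sq u : enorm u ^+ 2 = dotp u u.
Proof. by rewrite sqr_sqrtr // dotp_ge0. Qed.

Lemma CS u v : dotp u v <= enorm u * enorm v.
Proof.
have [A0|Apos] := eqVneq (enorm u) 0.
  by rewrite dotp_eq0 ?A0 ?mul0r // -enorm_sq A0 expr0n.
have [B0|Bpos] := eqVneq (enorm v) 0.
  by rewrite dotpC dotp_eq0 ?B0 ?mulr0 // -enorm_sq B0 expr0n.
have Ag : 0 < enorm u by rewrite lt_def Apos enorm_ge0.
have Bg : 0 < enorm v by rewrite lt_def Bpos enorm_ge0.
have := dotp_ge0 (enorm v *: u - enorm u *: v).
rewrite !(dotpBl, dotpBr, dotpZl, dotpZr) -!enorm_sq (dotpC v u).
move=> H.
have H2 : enorm u * enorm v * dotp u v <= enorm u * enorm v * (enorm u * enorm v) by nra.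
by rewrite ler_pM2l ?mulr_gt0 in H2.
Qed.

Lemma CSabs u v : `|dotp u v| <= enorm u * enorm v.
Proof.
rewrite ler_norml CS andbT.
have := CS (- u) v; rewrite dotpNl.
have -> : enorm (- u) = enorm u by rewrite /enorm dotpNl dotpNr opprK.
by rewrite lerNl.
Qed.

Lemma enormD u v : enorm (u + v) <= enorm u + enorm v.
Proof.
rewrite -(ger0_norm (addr_ge0 (enorm_ge0 u) (enorm_ge0 v))) -sqrtr_sqr.
rewrite ler_sqrt ?sqr_ge0 //.
rewrite !(dotpDl, dotpDr) sqrrD -!enorm_sq (dotpC v u).
have := CS u v; lra.
Qed.

Lemma enormZ a u : enorm (a *: u) = `|a| * enorm u.
Proof.
by rewrite /enorm dotpZl dotpZr mulrA -expr2 sqrtrM ?sqr_ge0 // sqrtr_sqr.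
Qed.

Lemma enormN u : enorm (- u) = enorm u.
Proof. by rewrite -scaleN1r enormZ normrN normr1 mul1r. Qed.

Lemma enorm_le_sq u (a : R) : 0 <= a -> dotp u u <= a ^+ 2 -> enorm u <= a.
Proof. by move=> a0 H; rewrite -(ger0_norm a0) -sqrtr_sqr ler_sqrt ?sqr_ge0. Qed.

Lemma enorm0_eq u : enorm u = 0 -> dotp u u = 0.
Proof. by move=> H; rewrite -enorm_sq H expr0n. Qed.
End Lin.
Arguments CS {R d}.
Arguments dotpC {R d}.
Arguments dotpDl {R d}.
Arguments dotpZl {R d}.
Arguments dotpNl {R d}.
Arguments dotpBl {R d}.
Arguments dotpDr {R d}.
Arguments dotpZr {R d}.
Arguments dotpNr {R d}.
Arguments dotpBr {R d}.
Arguments dotp0l {R d}.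
Arguments dotp_eq0 {R d}.
Arguments enorm_sq {R d}.
Arguments enormZ {R d}.
Arguments enormN {R d}.
Arguments enorm0_eq {R d}.
Arguments enormD {R d}.
Arguments CSabs {R d}.
Arguments enorm_ge0 {R d}.
Arguments dotp_ge0 {R d}.
Arguments enorm_le_sq {R d}.


Section An.
Variable R : realType.

Lemma lin_derive (a b s : R) : is_derive s 1 (fun s : R => a + s * b) b.
Proof.
have -> : (fun s : R => a + s * b) = cst a + ( *%R^~ b) by [].
apply: is_derive_eq.
by rewrite scaler0 !add0r [_%:A]mulr1. Qed.

Lemma comp_derive (f df : R -> R) (a b s : R) :
  (forall x : R, is_derive x 1 f (df x)) ->
  is_derive s 1 (fun s => f (a + s * b)) (df (a + s * b) * b).
Proof.
move=> H.
have dh : derivable (fun s : R => a + s * b) s 1 by apply: ex_derive.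
have df1 : derivable f (a + s * b) 1 by apply: ex_derive.
have dc : derivable (f \o (fun s : R => a + s * b)) s 1.
  apply/derivable1_diffP; apply: differentiable_comp; exact/derivable1_diffP.
apply: DeriveDef; first exact: dc.
rewrite -derive1E (derive1_comp dh df1) !derive1E.
by rewrite !derive_val add0r mul1r scaler0 add0r [_%:A]mulr1.
Qed.

Lemma descent1 (phi dphi : R -> R) (K : R) :
  (forall s : R, is_derive s 1 phi (dphi s)) ->
  (forall s : R, 0 <= s -> dphi s - dphi 0 <= K * s) ->
  phi 1 <= phi 0 + dphi 0 + K / 2.
Proof.
move=> H HK.
pose g : R -> R := phi - ( *%R^~ (dphi 0)) - (fun s => K / 2 * (s * s)).
have gd : forall s : R, is_derive s 1 g (dphi s - dphi 0 - K * s).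
  move=> s; apply: is_derive_eq.
  rewrite scaler0 add0r ![_%:A]mulr1 -[(K/2) *: _]/(K / 2 * (s + s)).
  lra.
have [c c01 E] := MVT ltr01 (fun x _ => gd x)
  (derivable_within_continuous (fun x _ => @ex_derive _ _ _ _ _ _ _ (gd x))).
have c0 : 0 <= c by move: c01; rewrite in_itv /= => /andP[/ltW].
have := HK c c0.
move: E; rewrite /g /= !fctE !mul0r !mul1r !mulr0 subr0 mulr1.
lra.
Qed.

Definition convex_fun' (f : R -> R) : Prop :=
  forall x y (s : R), 0 <= s <= 1 -> f (s * x + (1 - s) * y) <= s * f x + (1 - s) * f y.

Lemma convex_grad (f df : R -> R) : (forall x : R, is_derive x 1 f (df x)) ->
  convex_fun' f -> forall a b : R, f a + df a * (b - a) <= f b.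
Proof.
move=> H C a b.
pose q := fun h : R => h^-1 *: ((f \o shift a) (h *: 1) - f a).
have qc : q @ 0^' --> df a.
  have := @ex_derive _ _ _ _ _ _ _ (H a); rewrite /derivable -/q => /cvg_ex [l Hl].
  have := @derive_val _ _ _ _ _ _ _ (H a); rewrite /derive -/q (cvg_lim _ Hl) // => E.
  by rewrite -E.
have key : forall h, 0 < h / (b - a) <= 1 -> f (a + h) - f a <= h / (b - a) * (f b - f a).
  move=> h /andP[s0 s1].
  have := C b a (h / (b - a)); rewrite (ltW s0) s1 => /(_ isT).
  have -> : h / (b - a) * b + (1 - h / (b - a)) * a = a + h.
    have ba : b - a != 0 by apply: contraTneq s0 => ->; rewrite invr0 mulr0 ltxx.
    by field.
  lra.
case: (ltgtP a b) => [ab|ab|<-]; last by rewrite subrr mulr0 addr0.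
- have qr : q @ 0^'+ --> df a := cvg_dnbhs_at_right qc.
  have : lim (q @ 0^'+) <= (f b - f a) / (b - a).
    apply: limr_le; first by apply/cvg_ex; exists (df a).
    near=> h.
    have h0 : 0 < h by near: h; exact: nbhs_right_gt.
    have hb : h < b - a by near: h; apply: nbhs_right_lt; rewrite subr_gt0.
    have ba : 0 < b - a by rewrite subr_gt0.
    have := key h; rewrite divr_gt0 // ler_pdivrMr // mul1r (ltW hb) => /(_ isT).
    rewrite /q /= [h *: 1]mulr1 (addrC h a) [_ *: _]/(_ * _).
    move=> E; change (h^-1 * (f (a + h) - f a) <= (f b - f a) / (b - a)).
    rewrite mulrC ler_pdivrMr //.
    have -> : (f b - f a) / (b - a) * h = h / (b - a) * (f b - f a) by ring.
    exact: E.
  rewrite (cvg_lim _ qr) // ler_pdivlMr ?subr_gt0 //; lra.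
- have ql : q @ 0^'- --> df a := cvg_dnbhs_at_left qc.
  have : (f b - f a) / (b - a) <= lim (q @ 0^'-).
    apply: limr_ge; first by apply/cvg_ex; exists (df a).
    near=> h.
    have h0 : h < 0 by near: h; exact: nbhs_left_lt.
    have hb : b - a < h by near: h; apply: nbhs_left_gt; rewrite subr_lt0.
    have ba : b - a < 0 by rewrite subr_lt0.
    have s0 : 0 < h / (b - a) by rewrite -mulrNN -invrN divr_gt0 // oppr_gt0.
    have s1 : h / (b - a) <= 1 by rewrite ler_ndivrMr // mul1r ltW.
    have := key h; rewrite s0 s1 => /(_ isT) E.
    rewrite /q /= [h *: 1]mulr1 (addrC h a).
    change ((f b - f a) / (b - a) <= h^-1 * (f (a + h) - f a)).
    rewrite ler_ndivlMl //.
    have -> : h * ((f b - f a) / (b - a)) = h / (b - a) * (f b - f a) by ring.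
    exact: E.
  rewrite (cvg_lim _ ql) // ler_ndivrMr ?subr_lt0 //; lra.
Unshelve. all: by end_near. Qed.
End An.

Lemma h_bound (R : realType) (d : nat) (g u : 'rV[R]_d) (L : R) :
  0 <= L -> dotp g g <= L * dotp g u -> enorm (g - (L / 2) *: u) <= L / 2 * enorm u.
Proof.
move=> L0 H.
apply: enorm_le_sq; first by rewrite mulr_ge0 ?enorm_ge0 // divr_ge0.
have -> : dotp (g - (L / 2) *: u) (g - (L / 2) *: u)
   = dotp g g - L * dotp g u + (L / 2) ^+ 2 * dotp u u.
  rewrite dotpBl !dotpBr !dotpZl !dotpZr (dotpC u g); field.
  by [].
have -> : (L / 2 * enorm u) ^+ 2 = (L / 2) ^+ 2 * enorm u ^+ 2 by rewrite exprMn.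
rewrite enorm_sq; lra.
Qed.

Section Main.
Variables (R : realType) (d p : nat) (w : 'I_p -> 'rV[R]_d) (psi dpsi : 'I_p -> R -> R) (L : R).
Hypothesis Hd : forall i (s : R), is_derive s 1 (psi i) (dpsi i s).
Hypothesis Hc : forall i, convex_fun (psi i).
Hypothesis HL : lipschitz_vec L (ridge_grad w dpsi).
Local Notation G := (ridge_grad w dpsi).
Local Notation F := (ridge w psi).

Lemma dotpG x v : dotp (G x) v = \sum_(i < p) dpsi i (dotp (w i) x) * dotp (w i) v.
Proof. by rewrite /ridge_grad dotp_suml; apply: eq_bigr => i _; rewrite dotpZl. Qed.

Lemma F_convex x z : F x + dotp (G x) (z - x) <= F z.
Proof.
rewrite dotpG /ridge -big_split /=; apply: ler_sum => i _; rewrite dotpBr.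
have := @convex_grad _ (psi i) (dpsi i) (Hd i) (Hc i). exact.
Qed.

Lemma F_line z v (s : R) :
  is_derive s 1 (fun s => F (z + s *: v)) (dotp (G (z + s *: v)) v).
Proof.
have -> : (fun s => F (z + s *: v)) =
   \sum_(i < p) (fun s => psi i (dotp (w i) z + s * dotp (w i) v)).
  rewrite fct_sumE; apply/funext => t; rewrite /ridge; apply: eq_bigr => i _.
  by rewrite dotpDr dotpZr.
have := @is_derive_sum _ R^o R^o p (fun i s => psi i (dotp (w i) z + s * dotp (w i) v)) s 1
  _ (fun i => @comp_derive R (psi i) (dpsi i) (dotp (w i) z) (dotp (w i) v) s (Hd i)).
move=> H; apply: (is_derive_eq H).
rewrite dotpG; apply: eq_bigr => i _.
by rewrite dotpDr dotpZr.
Qed.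

Lemma F_descent z v : F (z + v) <= F z + dotp (G z) v + L / 2 * dotp v v.
Proof.
have := @descent1 _ (fun s => F (z + s *: v)) (fun s => dotp (G (z + s *: v)) v)
  (L * dotp v v) (F_line z v).
rewrite scale1r scale0r addr0 => H.
have H' : F (z + v) <= F z + dotp (G z) v + L * dotp v v / 2.
  apply: H => s s0.
  rewrite -dotpBl.
  apply: (le_trans (CS _ _)).
  have := HL.2 (z + s *: v) z; rewrite addrAC subrr add0r => Hl.
  rewrite enormZ ger0_norm // in Hl.
  apply: (le_trans (ler_wpM2r (enorm_ge0 v) Hl)).
  rewrite -enorm_sq expr2; apply: eqW'; ring.
apply: (le_trans H'); apply: eqW'; ring.
Qed.

Lemma cocoercive x z : enorm (G z - G x) ^+ 2 <= L * dotp (G z - G x) (z - x).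
Proof.
have L0 : 0 <= L := HL.1.
have [Le0|Lne] := eqVneq L 0.
  have := HL.2 z x; rewrite Le0 mul0r => H.
  have -> : enorm (G z - G x) = 0 by apply/le_anti; rewrite H enorm_ge0.
  by rewrite expr0n mul0r.
have Lp : 0 < L by rewrite lt_def Lne L0.
pose m := L^-1.
have Lm : L * m = 1 by rewrite /m mulfV.
have one : forall x z, F x + dotp (G x) (z - x) + m / 2 * dotp (G z - G x) (G z - G x) <= F z.
  move=> {}x {}z.
  pose g := G z - G x; pose v := - m *: g.
  have A := F_convex x (z + v).
  have B := F_descent z v.
  have e1 : dotp (G x) (z + v - x) = dotp (G x) (z - x) + dotp (G x) v.
    by rewrite addrAC dotpDr.
  have e2 : dotp (G z) v - dotp (G x) v = - m * dotp g g.
    by rewrite -dotpBl dotpZr.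
  have e3 : L / 2 * dotp v v = m / 2 * dotp g g.
    rewrite /v dotpZl dotpZr.
    have -> : L / 2 * (- m * (- m * dotp g g)) = (L * m) * (m / 2 * dotp g g) by ring.
    by rewrite Lm mul1r.
  rewrite -/g; lra.
have h1 := one x z.
have h2 := one z x.
have e4 : dotp (G x - G z) (G x - G z) = dotp (G z - G x) (G z - G x).
  by rewrite -opprB dotpNl dotpNr opprK.
have e5 : dotp (G x) (z - x) + dotp (G z) (x - z) = - dotp (G z - G x) (z - x).
  rewrite dotpBl -[z - x]opprB !dotpNr; ring.
have H : m * dotp (G z - G x) (G z - G x) <= dotp (G z - G x) (z - x).
  rewrite e4 in h2; move: h1 h2 e5.
  have -> : m / 2 * dotp (G z - G x) (G z - G x) = (m * dotp (G z - G x) (G z - G x)) / 2 by ring.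
  lra.
rewrite enorm_sq.
have := ler_wpM2l L0 H; rewrite mulrA Lm mul1r //.
Qed.

Lemma step_bound (alpha lambda beta : R) y y' x x' :
  0 <= lambda -> 0 <= alpha -> 0 <= beta ->
  0 <= 1 - alpha - alpha * lambda * L / 2 ->
  0 <= alpha - (1 - beta) * (alpha + alpha * lambda * L / 2) ->
  0 <= 1 - beta ->
  enorm ((x - x') - (1 - beta) *: (y - y')) <= beta * enorm (y - y') ->
  enorm ((denoise_step G alpha lambda y x - denoise_step G alpha lambda y' x')
     - (1 - beta) *: (y - y')) <= beta * enorm (y - y').
Proof.
move=> l0 a0 b0 q0 k0 c0 Hi.
have L0 : 0 <= L := HL.1.
set u := x - x' in Hi *; set v := y - y' in Hi *.
set c := 1 - beta in Hi c0 k0 *.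
set s := alpha * lambda * L / 2 in q0 k0.
set q := 1 - alpha - s in q0.
set k := alpha - c * (alpha + s) in k0.
pose g := G x - G x'.
pose h := g - (L / 2) *: u.
have hb : enorm h <= L / 2 * enorm u.
  apply: h_bound => //.
  by have := cocoercive x' x; rewrite enorm_sq.
have ub : enorm u <= enorm v.
  have -> : u = (u - c *: v) + c *: v by rewrite subrK.
  apply: (le_trans (enormD _ _)); rewrite enormZ ger0_norm //.
  have : beta + c = 1 by rewrite /c; ring.
  have := enorm_ge0 v; nra.
have -> : denoise_step G alpha lambda y x - denoise_step G alpha lambda y' x' - c *: v
    = q *: (u - c *: v) + k *: v - (alpha * lambda) *: h.
  apply/rowP => j; rewrite /denoise_step /h /g /q /k /s /u /v !mxE; ring.
apply: (le_trans (enormD _ _)); rewrite enormN.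
apply: (le_trans (lerD (enormD _ _) (lexx _))).
rewrite !enormZ !ger0_norm ?mulr_ge0 //.
have t1 := ler_wpM2l q0 Hi.
have t2 := ler_wpM2l (mulr_ge0 a0 l0) hb.
have t3 : alpha * lambda * (L / 2 * enorm u) <= s * enorm v.
  rewrite /s; have := ler_wpM2l (mulr_ge0 (mulr_ge0 a0 l0) (divr_ge0 L0 (ler0n _ 2))) ub.
  move=> H; rewrite mulrA; apply: (le_trans H); apply: eqW'; ring.
have e : q * (beta * enorm v) + k * enorm v + s * enorm v = beta * enorm v.
  rewrite /q /k /c; ring.
lra.
Qed.
End Main.

Theorem proposition6 (R : realType) (d p : nat) (w : 'I_p -> 'rV[R]_d)
    (psi dpsi : 'I_p -> R -> R) (L lambda alpha : R) (t : nat) :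
  (* psi_i is differentiable with derivative dpsi_i *)
  (forall i (s : R), is_derive s 1 (psi i) (dpsi i s)) ->
  (* psi_i' is Lipschitz, i.e. psi_i in C^{1,1} *)
  (forall i, exists K : R, lipschitz_real K (dpsi i)) ->
  (* psi_i convex *)
  (forall i, convex_fun (psi i)) ->
  (* L = Lip(grad R): the least Lipschitz constant of grad R *)
  lipschitz_vec L (ridge_grad w dpsi) ->
  (forall L' : R, lipschitz_vec L' (ridge_grad w dpsi) -> L <= L') ->
  0 <= lambda ->
  (1 <= t)%N ->
  0 <= alpha <= 2 / (2 + lambda * L) ->
  averaged (t_step_denoiser (ridge_grad w dpsi) alpha lambda t).
Proof.
move=> Hd _ Hc HL _ l0 _ /andP[a0 a2].
have L0 : 0 <= L := HL.1.
have lL : 0 <= lambda * L by rewrite mulr_ge0.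
have D0 : 0 < 2 + lambda * L by lra.
pose beta := (1 + lambda * L) / (2 + lambda * L).
have b0 : 0 < beta by rewrite divr_gt0 //; lra.
have c_eq : 1 - beta = (2 + lambda * L)^-1.
  rewrite /beta; field; lra.
have b1 : beta < 1.
  have : 0 < (2 + lambda * L)^-1 by rewrite invr_gt0.
  lra.
have aD : alpha * (2 + lambda * L) <= 2 by rewrite -ler_pdivlMr.
pose D := t_step_denoiser (ridge_grad w dpsi) alpha lambda t.
exists beta; split; first by rewrite b0 b1.
exists (fun y => beta^-1 *: (D y - (1 - beta) *: y)); split; last first.
  move=> y; rewrite scalerA mulfV ?gt_eqF // scale1r subrK //.
have inv : forall y y' n, enorm (iter n (denoise_step (ridge_grad w dpsi) alpha lambda y) y
     - iter n (denoise_step (ridge_grad w dpsi) alpha lambda y') y'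
     - (1 - beta) *: (y - y')) <= beta * enorm (y - y').
  move=> y y'; elim=> [|n IH].
    rewrite /=.
    have -> : y - y' - (1 - beta) *: (y - y') = beta *: (y - y').
      apply/rowP => j; rewrite !mxE; ring.
    by rewrite enormZ ger0_norm // ltW.
  rewrite !iterS; apply: (@step_bound R d p w psi dpsi L Hd Hc HL) => //.

  - exact: ltW.
  - have -> : 1 - alpha - alpha * lambda * L / 2 = (2 - alpha * (2 + lambda * L)) / 2 by field.
    by rewrite divr_ge0 //; lra.
  - rewrite c_eq.
    have -> : alpha - (2 + lambda * L)^-1 * (alpha + alpha * lambda * L / 2)
       = alpha * (2 + lambda * L) / (2 * (2 + lambda * L)) by field; lra.
    by rewrite divr_ge0 ?mulr_ge0 //; lra.
  - lra.
move=> y y'.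
have -> : beta^-1 *: (D y - (1 - beta) *: y) - beta^-1 *: (D y' - (1 - beta) *: y')
   = beta^-1 *: (D y - D y' - (1 - beta) *: (y - y')).
  apply/rowP => j; rewrite !mxE; ring.
rewrite enormZ ger0_norm; last by rewrite invr_ge0 ltW.
have bi : 0 <= beta^-1 by rewrite invr_ge0 ltW.
have H := ler_wpM2l bi (inv y y' t).
rewrite mulrA mulVf ?gt_eqF // mul1r in H.
exact: H.
Qed.
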